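(* Let $k\ge 4$ be an integer and let $\Sigma$ be an alphabet with $|\Sigma|=l$. If $l\le 1$, then for every antimorphic involution $\theta$ on $\Sigma^*$ there is no infinite word over $\Sigma$ that is pseudo-$k$th-power-free with respect to $\theta$. If $l\ge 3$, then for every antimorphic involution $\theta$ on $\Sigma^*$ there exists an infinite word over $\Sigma$ that is pseudo-$k$th-power-free with respect to $\theta$. If $l=2$, the existence depends on the involution: there exists a pseudo-$k$th-power-free infinite word over $\Sigma$ with respect to one antimorphic involution of $\Sigma^*$ but not with respect to another.
   Context: A function $\theta:\Sigma^*\to\Sigma^*$ is an antimorphic involution if $\theta(uv)=\theta(v)\theta(u)$ and $\theta(\theta(w))=w$ for all words $u,v,w$. For an integer $k\ge 2$, a nonempty word $w$ is a pseudo $k$th power with respect to $\theta$ if $w=u_1u_2\cdots u_k$ where for all $1\le i,j\le k$, either $u_i=u_j$ or $u_i=\theta(u_j)$. A (finite or infinite) word is pseudo-$k$th-power-free with respect to $\theta$ if none of its factors (contiguous subwords) is a pseudo $k$th power with respect to $\theta$. *)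

(* Defs.v *)
From mathcomp Require Import all_boot.
Set Implicit Arguments. Unset Strict Implicit. Unset Printing Implicit Defensive.

Definition antimorphic_involution (Sigma : Type) (theta : seq Sigma -> seq Sigma) : Prop :=
  (forall u v : seq Sigma, theta (u ++ v) = theta v ++ theta u) /\
  (forall w : seq Sigma, theta (theta w) = w).

Definition pseudo_kth_power (Sigma : Type) (theta : seq Sigma -> seq Sigma)
    (k : nat) (w : seq Sigma) : Prop :=
  w <> [::] /\
  exists us : seq (seq Sigma),
    size us = k /\ flatten us = w /\
    forall i j, i < k -> j < k ->
      nth [::] us i = nth [::] us j \/ nth [::] us i = theta (nth [::] us j).

Definition factor (Sigma : Type) (x : nat -> Sigma) (i n : nat) : seq Sigma :=
  mkseq (fun j => x (i + j)) n.

Definition pseudo_kth_power_free (Sigma : Type) (theta : seq Sigma -> seq Sigma)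
    (k : nat) (x : nat -> Sigma) : Prop :=
  forall i n, ~ pseudo_kth_power theta k (factor x i n).

(* Main.v *)
Require Import Defs.
From mathcomp Require Import all_boot.
From mathcomp Require Import zify.
Set Implicit Arguments. Unset Strict Implicit. Unset Printing Implicit Defensive.


Definition img (g : nat -> seq nat) (w : seq nat) := flatten (map g w).
Definition lt3 (w : seq nat) := all (fun c => c < 3) w.
Definition unif (g : nat -> seq nat) L := forall c, c < 3 -> size (g c) = L.

Definition sq_at {T : Type} (x0 : T) (z : seq T) i P :=
  0 < P /\ i + P + P <= size z /\ forall t, t < P -> nth x0 z (i+t) = nth x0 z (i+P+t).
Definition SF (z : seq nat) := forall i P, ~ sq_at 0 z i P.

Lemma img_cat g u v : img g (u ++ v) = img g u ++ img g v.
Proof. by rewrite /img map_cat flatten_cat. Qed.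

Lemma lt3_take n w : lt3 w -> lt3 (take n w).
Proof. by rewrite /lt3 -{1}(cat_take_drop n w) all_cat => /andP[]. Qed.
Lemma lt3_drop n w : lt3 w -> lt3 (drop n w).
Proof. by rewrite /lt3 -{1}(cat_take_drop n w) all_cat => /andP[]. Qed.
Lemma lt3_nth w q : lt3 w -> q < size w -> nth 0 w q < 3.
Proof. by move=> /allP H Hq; apply: H; rewrite mem_nth. Qed.

Section Img.
Variables (g : nat -> seq nat) (L : nat).
Hypothesis Hu : unif g L.

Lemma size_img w : lt3 w -> size (img g w) = L * size w.
Proof.
elim: w => [|c w IH]; first by rewrite muln0.
rewrite {1}/lt3 /= => /andP[Hc Hw].
by rewrite /img /= size_cat -/(img g w) IH // Hu // mulnS.
Qed.

Lemma nth_img w j o : lt3 w -> j < size w -> o < L ->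
  nth 0 (img g w) (j*L+o) = nth 0 (g (nth 0 w j)) o.
Proof.
elim: w j => [|c w IH] j //.
rewrite {1}/lt3 /= => /andP[Hc Hw] Hj Ho.
rewrite /img /= -/(img g w) nth_cat Hu //.
case: j Hj => [|j] Hj /=; first by rewrite mul0n add0n Ho.
rewrite mulSn -addnA ltnNge leq_addr /= addKn IH //.
Qed.

Lemma nth_img_sub w j N q : lt3 w ->
  q < size (img g (take N (drop j w))) ->
  nth 0 (img g (take N (drop j w))) q = nth 0 (img g w) (j*L + q).
Proof.
move=> Hw Hq.
have [Hj|Hj] := leqP j (size w); last first.
  by move: Hq; rewrite drop_oversize ?take0 //; apply: ltnW.
rewrite -{2}(cat_take_drop j w) -{2}(cat_take_drop N (drop j w)) !img_cat.
rewrite nth_cat size_img ?lt3_take // size_take_min (minn_idPl Hj) mulnC.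
rewrite ltnNge leq_addr /= addKn nth_cat Hq //.
Qed.

Lemma size_img_sub w j N : lt3 w -> size (img g (take N (drop j w))) = L * minn N (size w - j).
Proof. by move=> Hw; rewrite size_img ?lt3_take ?lt3_drop // size_take_min size_drop. Qed.

End Img.


Definition sq_atb (z : seq nat) i P :=
  (0 < P) && (i+P+P <= size z) && all (fun t => nth 0 z (i+t) == nth 0 z (i+P+t)) (iota 0 P).
Definition has_sq (z : seq nat) :=
  has (fun i => has (fun P => sq_atb z i P) (iota 0 (size z).+1)) (iota 0 (size z).+1).

Lemma has_sqP z : has_sq z <-> exists i P, sq_at 0 z i P.
Proof.
split.
  case/hasP=> i _ /hasP[P _ /andP[/andP[HP Hs] /allP Ha]].
  exists i, P; split=> //; split=> // t Ht; apply/eqP/Ha; rewrite mem_iota; lia.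
case=> i [P [HP [Hs Ht]]]; apply/hasP; exists i; first by rewrite mem_iota; lia.
apply/hasP; exists P; first by rewrite mem_iota; lia.
rewrite /sq_atb HP Hs /=; apply/allP=> t; rewrite mem_iota => /andP[_ H].
by apply/eqP/Ht; lia.
Qed.

Lemma SF_has z : SF z -> has_sq z = false.
Proof. by move=> H; apply/negbTE/negP => /has_sqP[i [P /H]]. Qed.

Lemma sq_tr (A B : Type) (a0 : A) (b0 : B) (z1 : seq A) (z2 : seq B) p1 p2 P (e : B -> A) :
  p2 + P + P <= size z2 ->
  (forall q, q < P + P -> nth a0 z1 (p1+q) = e (nth b0 z2 (p2+q))) ->
  (forall q q', q < P + P -> q' < P + P -> e (nth b0 z2 (p2+q)) = e (nth b0 z2 (p2+q')) ->
      nth b0 z2 (p2+q) = nth b0 z2 (p2+q')) ->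
  sq_at a0 z1 p1 P -> sq_at b0 z2 p2 P.
Proof.
move=> Hs He Hi [HP [_ Ht]]; split=> //; split=> // t tP.
rewrite -addnA; apply: Hi; try lia.
have := Ht t tP; rewrite -addnA He ?He //; lia.
Qed.

Section Core.
Variables (g : nat -> seq nat) (L S : nat).
Hypothesis L0 : 0 < L.
Hypothesis Hu : unif g L.
Hypothesis Hinj : forall a b, a < 3 -> b < 3 -> g a = g b -> a = b.
Hypothesis Hbif : forall a b c s, a < 3 -> b < 3 -> c < 3 -> 0 < s -> s < L ->
  drop s (g a) = drop s (g b) -> take s (g b) = take s (g c) -> a = b \/ b = c.
Hypothesis Hsync : forall w, lt3 w -> SF w -> forall q q',
  q + S <= size (img g w) -> q' + S <= size (img g w) ->
  (forall t, t < S -> nth 0 (img g w) (q+t) = nth 0 (img g w) (q'+t)) -> q %% L = q' %% L.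

Lemma long_sq w i P : lt3 w -> SF w -> S <= P -> L <= P -> ~ sq_at 0 (img g w) i P.
Proof.
move=> Hw Hsf HSP HLP [HP [Hs Hsq]].
have Hsz : size (img g w) = L * size w by apply: size_img.
have Hmod : i %% L = (i + P) %% L.
  apply: (Hsync Hw Hsf); try lia.
  by move=> t Ht; apply: Hsq; lia.
have HPm : P = (P %/ L) * L.
  move: Hmod; rewrite -{1}[i]addn0 => /eqP; rewrite eqn_modDl mod0n => /eqP H.
  by rewrite {1}(divn_eq P L) -H addn0.
set m := P %/ L in HPm.
have Hm : 0 < m by rewrite /m divn_gt0.
have Hi := divn_eq i L.
set j0 := i %/ L in Hi. set s := i %% L in Hi.
have HsL : s < L by rewrite ltn_mod.
have H1 : forall x y, x < size w -> y < size w ->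
    (forall o, o < L -> nth 0 (img g w) (x*L+o) = nth 0 (img g w) (y*L+o)) -> nth 0 w x = nth 0 w y.
  move=> x y Hx Hy Ho; apply: Hinj; try by apply: lt3_nth.
  apply: (@eq_from_nth _ 0); first by rewrite !Hu //; apply: lt3_nth.
  move=> o; rewrite Hu; last by apply: lt3_nth.
  by move=> oL; rewrite -!(nth_img Hu) // Ho.
have Hbnd : (j0 + m + m) * L <= i + P + P by rewrite !mulnDl -HPm; lia.
have Hbnd2 : i + P + P <= L * size w by rewrite -Hsz.
have Hjw : j0 + m + m <= size w.
  by rewrite -(leq_pmul2l L0) mulnC; apply: leq_trans Hbnd Hbnd2.
have Hfull : forall r, 1 <= r < m -> j0 + r < size w -> j0 + m + r < size w ->
    nth 0 w (j0 + r) = nth 0 w (j0 + m + r).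
  move=> r /andP[r1 rm] H2 H3; apply: H1 => // o oL.
  have Hr : r * L + L <= m * L by rewrite -mulSnr leq_mul2r rm orbT.
  have HrL : L <= r * L by rewrite leq_pmull.
  have -> : (j0 + r) * L + o = i + (r * L + o - s) by rewrite mulnDl; lia.
  have -> : (j0 + m + r) * L + o = i + P + (r * L + o - s) by rewrite !mulnDl; lia.
  by apply: Hsq; lia.
case: (posnP s) => [s0|spos].
  apply: (Hsf j0 m); split=> //; split=> // r rm.
  case: (posnP r) => [->|rpos]; last by apply: Hfull; lia.
  rewrite !addn0; apply: H1; try lia.
  move=> o oL; rewrite mulnDl -HPm.
  have -> : j0 * L + P + o = i + P + o by lia.
  have -> : j0 * L + o = i + o by lia.
  apply: Hsq; lia.
have Hlast : (j0 + m + m) * L < L * size w by rewrite !mulnDl -HPm; lia.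
have Hjw2 : j0 + m + m < size w by rewrite -(ltn_pmul2l L0) mulnC.
have La : nth 0 w j0 < 3 by apply: lt3_nth; lia.
have Lb : nth 0 w (j0 + m) < 3 by apply: lt3_nth; lia.
have Lc : nth 0 w (j0 + m + m) < 3 by apply: lt3_nth; lia.
have Hd : drop s (g (nth 0 w j0)) = drop s (g (nth 0 w (j0 + m))).
  apply: (@eq_from_nth _ 0); first by rewrite !size_drop !Hu.
  rewrite size_drop Hu // => o Ho; rewrite !nth_drop -!(nth_img Hu) //; try lia.
  have -> : j0 * L + (s + o) = i + o by lia.
  have -> : (j0 + m) * L + (s + o) = i + P + o by rewrite mulnDl -HPm; lia.
  by apply: Hsq; lia.
have Ht : take s (g (nth 0 w (j0 + m))) = take s (g (nth 0 w (j0 + m + m))).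
  apply: (@eq_from_nth _ 0); first by rewrite !size_take !Hu.
  rewrite size_take Hu // HsL => o Ho; rewrite !nth_take // -!(nth_img Hu) //; try lia.
  have -> : (j0 + m) * L + o = i + (P - s + o) by rewrite mulnDl -HPm; lia.
  have -> : (j0 + m + m) * L + o = i + P + (P - s + o) by rewrite !mulnDl -HPm; lia.
  by apply: Hsq; lia.
have [Eab|Ebc] := Hbif La Lb Lc spos HsL Hd Ht.
- apply: (Hsf j0 m); split=> //; split=> // r rm.
  case: (posnP r) => [->|rpos]; last by apply: Hfull; lia.
  by rewrite !addn0.
- apply: (Hsf j0.+1 m); split=> //; split; first lia.
  move=> r rm; case: (ltnP r.+1 m) => Hr.
  + have := Hfull r.+1; rewrite !addnS !addSn; apply; lia.
  + have -> : r = m.-1 by lia.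
    have -> : j0.+1 + m.-1 = j0 + m by lia.
    by have -> : j0.+1 + m + m.-1 = j0 + m + m by lia.
Qed.
End Core.


Fixpoint allw n : seq (seq nat) :=
  if n is n'.+1 then flatten [seq [seq c :: w | w <- allw n'] | c <- [:: 0; 1; 2]]
  else [:: [::]].
Definition allle N := flatten [seq allw n | n <- iota 0 N.+1].

Lemma allw_complete w : lt3 w -> w \in allw (size w).
Proof.
elim: w => [|c w IH]; first by rewrite inE.
rewrite {1}/lt3 /= => /andP[Hc Hw].
rewrite !mem_cat.
have H := map_f (cons c) (IH Hw).
by case: c Hc H => [|[|[|c]]] // _ ->; rewrite ?orbT.
Qed.

Lemma allle_complete w N : lt3 w -> size w <= N -> w \in allle N.
Proof.
move=> Hw HN; apply/flattenP; exists (allw (size w)); last by apply: allw_complete.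
by apply/mapP; exists (size w) => //; rewrite mem_iota; lia.
Qed.

Lemma SF_sub w j N : SF w -> SF (take N (drop j w)).
Proof.
move=> Hsf i P Hsq.
have Hj : j <= size w.
  case: (leqP j (size w)) => // Hj; move: Hsq => [HP [H _]].
  by move: H; rewrite drop_oversize /=; lia.
have [_ [H _]] := Hsq.
move: H; rewrite size_take size_drop => H.
apply: (Hsf (j + i) P); apply: (@sq_tr _ _ 0 0 _ _ i _ _ id) Hsq.
- move: H; case: ifP; lia.
- move=> q Hq; rewrite nth_take; last by move: H; case: ifP; lia.
  by rewrite nth_drop addnA.
- by [].
Qed.

Section Loc.
Variables (g : nat -> seq nat) (L : nat).
Hypothesis L0 : 0 < L.
Hypothesis Hu : unif g L.

Lemma loc w q len N : lt3 w -> q + len <= size (img g w) -> L + len <= N * L ->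
  let v := take N (drop (q %/ L) w) in
  [/\ q %% L + len <= size (img g v),
      forall t, t < len -> nth 0 (img g v) (q %% L + t) = nth 0 (img g w) (q + t),
      lt3 v & size v <= N].
Proof.
move=> Hw Hq HN v.
have Hi := divn_eq q L. have Hm : q %% L < L by rewrite ltn_mod.
have Hs1 : q %% L + len <= size (img g v).
  rewrite /v (size_img_sub Hu) //. rewrite (size_img Hu Hw) in Hq.
  case: (leqP N (size w - q %/ L)) => HH.
  - rewrite ?(minn_idPl HH) mulnC; lia.
  - rewrite ?(minn_idPr (ltnW HH)) mulnBr (mulnC L (q %/ L)); lia.
split=> //.
- move=> t Ht; rewrite /v (nth_img_sub Hu) //; last by move: Hs1; rewrite /v; lia.
  by rewrite addnA -Hi.
- by apply: lt3_take; apply: lt3_drop.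
- by rewrite /v size_take_min geq_minl.
Qed.
End Loc.


Lemma take_drop_eq (z1 z2 : seq nat) o1 o2 S :
  o1 + S <= size z1 -> o2 + S <= size z2 ->
  (forall t, t < S -> nth 0 z1 (o1+t) = nth 0 z2 (o2+t)) ->
  take S (drop o1 z1) = take S (drop o2 z2).
Proof.
move=> H1 H2 H; apply: (@eq_from_nth _ 0).
  by rewrite !size_takel ?size_drop //; lia.
rewrite size_takel ?size_drop; last lia.
by move=> t Ht; rewrite !nth_take // !nth_drop; apply: H.
Qed.

Definition wins g L S N :=
  flatten [seq [seq (o, take S (drop o (img g v))) | o <- iota 0 L & o + S <= size (img g v)]
          | v <- allle N & ~~ has_sq v].
Definition sync_check g L S N :=
  let W := wins g L S N in all (fun p => all (fun p' => (p.2 == p'.2) ==> (p.1 == p'.1)) W) W.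
Definition inj_check (g : nat -> seq nat) :=
  all (fun a => all (fun b => (g a == g b) ==> (a == b)) (iota 0 3)) (iota 0 3).
Definition bif_check (g : nat -> seq nat) L :=
  all (fun a => all (fun b => all (fun c => all (fun s =>
    ((drop s (g a) == drop s (g b)) && (take s (g b) == take s (g c))) ==> ((a == b) || (b == c)))
    (iota 1 L)) (iota 0 3)) (iota 0 3)) (iota 0 3).
Definition unif_check (g : nat -> seq nat) L := all (fun c => size (g c) == L) (iota 0 3).
Definition lt3_check (g : nat -> seq nat) := all (fun c => lt3 (g c)) (iota 0 3).

Lemma in3 a : a < 3 -> a \in iota 0 3.
Proof. by rewrite mem_iota. Qed.

Lemma unif_sound g L : unif_check g L -> unif g L.
Proof. by move=> /allP H c /in3 /H /eqP. Qed.
Lemma inj_sound g : inj_check g -> forall a b, a < 3 -> b < 3 -> g a = g b -> a = b.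
Proof.
move=> /allP H a b /in3 /H /allP Ha /in3 /Ha /implyP Hb E.
by apply/eqP/Hb/eqP.
Qed.
Lemma bif_sound g L : bif_check g L -> forall a b c s, a < 3 -> b < 3 -> c < 3 -> 0 < s -> s < L ->
  drop s (g a) = drop s (g b) -> take s (g b) = take s (g c) -> a = b \/ b = c.
Proof.
move=> /allP H a b c s /in3 /H /allP Ha /in3 /Ha /allP Hb /in3 /Hb /allP Hc s0 sL E1 E2.
have : s \in iota 1 L by rewrite mem_iota; lia.
move=> /Hc /implyP; rewrite E1 E2 !eqxx => /(_ isT) /orP[/eqP|/eqP]; tauto.
Qed.
Lemma lt3_img g w : lt3_check g -> lt3 w -> lt3 (img g w).
Proof.
move=> /allP H; elim: w => [|c w IH] //; rewrite {1}/lt3 /= => /andP[Hc Hw].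
rewrite /img /= -/(img g w) /lt3 all_cat; apply/andP; split; last by apply: IH.
by apply: H; apply: in3.
Qed.

Lemma mem_wins g L S N v o : v \in allle N -> ~~ has_sq v -> o < L -> o + S <= size (img g v) ->
  (o, take S (drop o (img g v))) \in wins g L S N.
Proof.
move=> Hv Hs Ho HS; apply/flattenP.
exists [seq (o, take S (drop o (img g v))) | o <- iota 0 L & o + S <= size (img g v)].
  by apply: (map_f (fun v => [seq (o, take S (drop o (img g v))) | o <- iota 0 L & o + S <= size (img g v)])); rewrite mem_filter Hs.
apply: (map_f (fun o => (o, take S (drop o (img g v))))); rewrite mem_filter HS mem_iota; lia.
Qed.

Lemma sync_sound g L S N : 0 < L -> unif g L -> L + S <= N * L -> sync_check g L S N ->
  forall w, lt3 w -> SF w -> forall q q',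
  q + S <= size (img g w) -> q' + S <= size (img g w) ->
  (forall t, t < S -> nth 0 (img g w) (q+t) = nth 0 (img g w) (q'+t)) -> q %% L = q' %% L.
Proof.
move=> L0 Hu HN /allP Hc w Hw Hsf q q' Hq Hq' Heq.
have [A1 A2 A3 A4] := loc L0 Hu Hw Hq HN.
have [B1 B2 B3 B4] := loc L0 Hu Hw Hq' HN.
have Hm : q %% L < L by rewrite ltn_mod.
have Hm' : q' %% L < L by rewrite ltn_mod.
have M1 := mem_wins (allle_complete A3 A4) (negbT (SF_has (@SF_sub w (q %/ L) N Hsf))) Hm A1.
have M2 := mem_wins (allle_complete B3 B4) (negbT (SF_has (@SF_sub w (q' %/ L) N Hsf))) Hm' B1.
have := Hc _ M1 => /allP /(_ _ M2) /implyP /= H.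
apply/eqP/H/eqP; apply: take_drop_eq => // t Ht.
by rewrite A2 // B2 // Heq.
Qed.

Section Props.
Variables (g : nat -> seq nat) (L S N : nat).
Hypothesis L0 : 0 < L.
Hypothesis Huc : unif_check g L.
Hypothesis Hic : inj_check g.
Hypothesis Hbc : bif_check g L.
Hypothesis HN : L + S <= N * L.
Hypothesis Hsc : sync_check g L S N.

Lemma long_sq' w i P : lt3 w -> SF w -> S <= P -> L <= P -> ~ sq_at 0 (img g w) i P.
Proof.
apply: (long_sq L0 (unif_sound Huc) (inj_sound Hic) (bif_sound Hbc)).
exact: (sync_sound L0 (unif_sound Huc) HN Hsc).
Qed.

Definition short_sq_check N' := all (fun v => has_sq v || ~~ has_sq (img g v)) (allle N').

Lemma SF_img w : S <= L -> short_sq_check 3 -> lt3 w -> SF w -> SF (img g w).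
Proof.
move=> HSL Hsh0 Hw Hsf i P Hsq; have Hsh := allP Hsh0.
case: (leqP L P) => HLP; first by apply: (long_sq' Hw Hsf _ HLP Hsq); lia.
have [_ [Hb _]] := Hsq.
have Hu := unif_sound Huc.
have HN3 : L + (P + P) <= 3 * L by lia.
have Hb' : i + (P + P) <= size (img g w) by lia.
have [A1 A2 A3 A4] := loc L0 Hu Hw Hb' HN3.
set v := take 3 (drop (i %/ L) w) in A1 A2 A3 A4.
have Hv : has_sq (img g v).
  apply/has_sqP; exists (i %% L), P.
  apply: (@sq_tr _ _ 0 0 _ _ i _ _ id) Hsq; first by rewrite -addnA.
  - by move=> q Hq; rewrite A2.
  - by [].
have := Hsh v (allle_complete A3 A4).
by rewrite (SF_has (@SF_sub w (i %/ L) 3 Hsf)) Hv.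
Qed.
End Props.


Definition ppat {T : Type} (x0 : T) (z : seq T) i m :=
  0 < m /\ i + 4 * m <= size z /\ forall j, j < 4 ->
    (forall t, t < m -> nth x0 z (i + (j * m + t)) = nth x0 z (i + t)) \/
    (forall t, t < m -> nth x0 z (i + (j * m + t)) = nth x0 z (i + (m - t.+1))).

Definition pp_pref (s : seq nat) m :=
  (4 * m <= size s) &&
  all (fun j => (take m (drop (j * m) s) == take m s) || (take m (drop (j * m) s) == rev (take m s)))
      (iota 0 4).
Definition has_pp (z : seq nat) M :=
  has (fun i => has (fun m => pp_pref (drop i z) m) (iota 1 M)) (iota 0 (size z).+1).

Lemma ppat_has z i m M : ppat 0 z i m -> m <= M -> has_pp z M.
Proof.
move=> [m0 [Hs Hb]] HM; apply/hasP; exists i; first by rewrite mem_iota; lia.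
apply/hasP; exists m; first by rewrite mem_iota; lia.
apply/andP; split; first by rewrite size_drop; lia.
apply/allP=> j; rewrite mem_iota => /andP[_ Hj].
have Hsz1 : size (take m (drop (j * m) (drop i z))) = m.
  rewrite size_takel // !size_drop.
  have : j * m + m <= 4 * m by rewrite -mulSnr leq_mul2r Hj orbT.
  lia.
have Hsz2 : size (take m (drop i z)) = m by rewrite size_takel // size_drop; lia.
case: (Hb j Hj) => H; apply/orP; [left|right]; apply/eqP.
- apply: (@eq_from_nth _ 0); first by rewrite Hsz1 Hsz2.
  rewrite Hsz1 => t Ht; rewrite !nth_take // !nth_drop H //.
- apply: (@eq_from_nth _ 0); first by rewrite Hsz1 size_rev Hsz2.
  rewrite Hsz1 => t Ht; rewrite nth_rev ?Hsz2 // !nth_take // ?nth_drop ?H //; lia.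
Qed.

Lemma pp_sq {T : Type} (x0 : T) z i m : ppat x0 z i m -> exists i' P, m <= P /\ sq_at x0 z i' P.
Proof.
move=> [m0 [Hs Hb]].
pose U j := forall t, t < m -> nth x0 z (i + (j * m + t)) = nth x0 z (i + t).
pose R j := forall t, t < m -> nth x0 z (i + (j * m + t)) = nth x0 z (i + (m - t.+1)).
have B1 : U 1 \/ R 1 := Hb 1 isT.
have B2 : U 2 \/ R 2 := Hb 2 isT.
have B3 : U 3 \/ R 3 := Hb 3 isT.
case: B1 => B1.
  exists i, m; split; first done; split; first done; split; first lia.
  move=> t Ht; have := B1 t Ht.
  by have -> : i + (1 * m + t) = i + m + t by lia.
case: B2 => B2.
- case: B3 => B3.
  + exists (i + 2 * m), m; split; first done; split; first done; split; first lia.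
    move=> t Ht; have := B2 t Ht; have := B3 t Ht.
    have -> : i + (3 * m + t) = i + 2 * m + m + t by lia.
    have -> : i + (2 * m + t) = i + 2 * m + t by lia.
    by move=> -> ->.
  + exists i, (2 * m); split; first lia; split; first lia; split; first lia.
    move=> t Ht; case: (ltnP t m) => Htm.
    * have := B2 t Htm.
      have -> : i + (2 * m + t) = i + 2 * m + t by lia.
    by move=> ->.
    * have := B3 (t - m) ltac:(lia); have := B1 (t - m) ltac:(lia).
      have -> : i + (3 * m + (t - m)) = i + 2 * m + t by lia.
      have -> : i + (1 * m + (t - m)) = i + t by lia.
    by move=> -> ->.
- exists (i + m), m; split; first done; split; first done; split; first lia.
  move=> t Ht; have := B1 t Ht; have := B2 t Ht.
  have -> : i + (2 * m + t) = i + m + m + t by lia.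
  have -> : i + (1 * m + t) = i + m + t by lia.
    by move=> -> ->.
Qed.


Lemma pp_tr (A B : Type) (a0 : A) (b0 : B) (z1 : seq A) (z2 : seq B) p1 p2 m (e : B -> A) :
  p2 + 4 * m <= size z2 ->
  (forall q, q < 4 * m -> nth a0 z1 (p1+q) = e (nth b0 z2 (p2+q))) ->
  (forall q q', q < 4 * m -> q' < 4 * m -> e (nth b0 z2 (p2+q)) = e (nth b0 z2 (p2+q')) ->
      nth b0 z2 (p2+q) = nth b0 z2 (p2+q')) ->
  ppat a0 z1 p1 m -> ppat b0 z2 p2 m.
Proof.
move=> Hs He Hi [m0 [_ Hb]]; split=> //; split=> // j Hj.
have Hjm : j * m + m <= 4 * m by rewrite -mulSnr leq_mul2r Hj orbT.
case: (Hb j Hj) => H; [left|right] => t Ht; apply: Hi; try lia;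
  rewrite -!He; try lia; by apply: H.
Qed.

Section NoPP.
Variables (g : nat -> seq nat) (L S N M N' : nat).
Hypothesis L0 : 0 < L.
Hypothesis Huc : unif_check g L.
Hypothesis Hic : inj_check g.
Hypothesis Hbc : bif_check g L.
Hypothesis HN : L + S <= N * L.
Hypothesis Hsc : sync_check g L S N.
Hypothesis HSM : S <= M.+1.
Hypothesis HLM : L <= M.+1.
Hypothesis HN' : L + 4 * M <= N' * L.
Hypothesis Hshort : all (fun v => has_sq v || ~~ has_pp (img g v) M) (allle N').

Lemma noPP w i m : lt3 w -> SF w -> ~ ppat 0 (img g w) i m.
Proof.
move=> Hw Hsf Hpp.
case: (leqP m M) => HmM; last first.
  have [i' [P [HmP Hsq]]] := pp_sq Hpp.
  by apply: (long_sq' L0 Huc Hic Hbc HN Hsc Hw Hsf _ _ Hsq); lia.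
have [m0 [Hb _]] := Hpp.
have Hu := unif_sound Huc.
have HN4 : L + 4 * m <= N' * L by lia.
have [A1 A2 A3 A4] := loc L0 Hu Hw Hb HN4.
set v := take N' (drop (i %/ L) w) in A1 A2 A3 A4.
have Hv : has_pp (img g v) M.
  apply: (@ppat_has _ (i %% L) m) => //.
  apply: (@pp_tr _ _ 0 0 _ _ i _ _ id) Hpp => //.
  by move=> q Hq; rewrite A2.
have := allP Hshort v (allle_complete A3 A4).
by rewrite (SF_has (@SF_sub w (i %/ L) N' Hsf)) Hv.
Qed.
End NoPP.


Lemma nth_catr (T : Type) (x0 : T) (a b : seq T) q : nth x0 (a ++ b) (size a + q) = nth x0 b q.
Proof. by rewrite nth_cat ltnNge leq_addr /= addKn. Qed.

Lemma sq_cat (T : Type) (x0 : T) (a s b : seq T) : s <> [::] ->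
  sq_at x0 (a ++ s ++ s ++ b) (size a) (size s).
Proof.
move=> Hs; split; first by case: s Hs.
split; first by rewrite !size_cat; lia.
move=> t Ht; rewrite !nth_catr -addnA nth_catr.
by rewrite nth_catr nth_cat Ht nth_cat Ht.
Qed.

Lemma theta_nil (T : Type) (th : seq T -> seq T) : antimorphic_involution th -> th [::] = [::].
Proof.
move=> [Ha _]; have := Ha [::] [::]; rewrite cat0s => /(congr1 size).
by rewrite size_cat; case: (th [::]) => //= x l; lia.
Qed.

Lemma flatten_nil (T : Type) (us : seq (seq T)) :
  (forall i, i < size us -> nth [::] us i = [::]) -> flatten us = [::].
Proof.
elim: us => [|u us IH] //= H.
have /= -> := H 0 isT; rewrite IH // => i Hi; exact: (H i.+1).
Qed.

Lemma pk_split (T : Type) (th : seq T -> seq T) k w : antimorphic_involution th -> 4 <= k ->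
  pseudo_kth_power th k w ->
  exists u0 u1 u2 u3 r, w = u0 ++ u1 ++ u2 ++ u3 ++ r /\ u0 <> [::] /\
    (u1 = u0 \/ u1 = th u0) /\ (u2 = u0 \/ u2 = th u0) /\ (u3 = u0 \/ u3 = th u0).
Proof.
move=> Hth Hk [Hne [us [Hsz [Hfl Hrel]]]].
case: us Hsz Hfl Hrel => [|u0 [|u1 [|u2 [|u3 r]]]] //= Hsz; try lia.
move=> Hfl Hrel.
exists u0, u1, u2, u3, (flatten r); split; first by rewrite -Hfl !catA.
split.
  move=> E; apply: Hne; rewrite -Hfl; apply: (@flatten_nil _ (u0 :: u1 :: u2 :: u3 :: r)).
  move=> i Hi; have Hik : i < k by rewrite -Hsz.
  by have [->|->] := Hrel i 0 Hik ltac:(lia); rewrite /= E ?theta_nil.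
split; first exact: (Hrel 1 0 ltac:(lia) ltac:(lia)).
split; first exact: (Hrel 2 0 ltac:(lia) ltac:(lia)).
exact: (Hrel 3 0 ltac:(lia) ltac:(lia)).
Qed.

Lemma pk_sq (T : Type) (x0 : T) (th : seq T -> seq T) k w : antimorphic_involution th -> 4 <= k ->
  pseudo_kth_power th k w -> exists i P, sq_at x0 w i P.
Proof.
move=> Hth Hk Hp.
have [u0 [u1 [u2 [u3 [r [Ew [Hn [H1 [H2 H3]]]]]]]]] := pk_split Hth Hk Hp.
have Hv : th u0 <> [::].
  move=> E; apply: Hn; have [_ Hi] := Hth; by rewrite -(Hi u0) E theta_nil.
subst w.
case: H1 => ->.
  by exists 0, (size u0); exact: (@sq_cat T x0 [::] u0 (u2 ++ u3 ++ r) Hn).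
case: H2 => ->.
  case: H3 => ->.
    exists (size (u0 ++ th u0)), (size u0).
    by rewrite catA; exact: (@sq_cat T x0 (u0 ++ th u0) u0 r Hn).
  exists 0, (size (u0 ++ th u0)).
  have -> : u0 ++ th u0 ++ u0 ++ th u0 ++ r = (u0 ++ th u0) ++ (u0 ++ th u0) ++ r by rewrite !catA.
  by apply: (@sq_cat T x0 [::] (u0 ++ th u0) r); case: (u0) Hn.
by exists (size u0), (size (th u0)); exact: (@sq_cat T x0 u0 (th u0) (u3 ++ r) Hv).
Qed.

Lemma pk_pp (T : Type) (x0 : T) k w : 4 <= k ->
  pseudo_kth_power (@rev T) k w -> exists m, ppat x0 w 0 m.
Proof.
move=> Hk Hp.
have Hth : antimorphic_involution (@rev T) by split; [exact: rev_cat | exact: revK].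
have [u0 [u1 [u2 [u3 [r [Ew [Hn [H1 [H2 H3]]]]]]]]] := pk_split Hth Hk Hp.
exists (size u0); subst w.
set m := size u0.
have S1 : size u1 = m by case: H1 => ->; rewrite ?size_rev.
have S2 : size u2 = m by case: H2 => ->; rewrite ?size_rev.
have S3 : size u3 = m by case: H3 => ->; rewrite ?size_rev.
have Hm : 0 < m by rewrite /m; case: (u0) Hn.
split=> //; split; first by rewrite !size_cat S1 S2 S3; lia.
set W := u0 ++ u1 ++ u2 ++ u3 ++ r.
have W0 : forall t, t < m -> nth x0 W t = nth x0 u0 t by move=> t Ht; rewrite nth_cat Ht.
have G : forall u, (u = u0 \/ u = rev u0) -> forall d, (forall t, t < m ->
     nth x0 W (d + t) = nth x0 u t) ->
   (forall t, t < m -> nth x0 W (0 + (d + t)) = nth x0 W (0 + t)) \/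
   (forall t, t < m -> nth x0 W (0 + (d + t)) = nth x0 W (0 + (m - t.+1))).
  move=> u Hu d Hb; case: Hu => Hu; [left|right] => t Ht; rewrite !add0n Hb // Hu.
  - by rewrite W0.
  - by rewrite nth_rev // W0 //; rewrite /m; lia.
move=> j Hj.
case: j Hj => [|[|[|[|j]]]] Hj //.
- have := G u0 (or_introl erefl) 0.
  by rewrite mul0n; apply => t Ht; rewrite add0n W0.
- have := G u1 H1 (size u0).
  rewrite mul1n; apply => t Ht; rewrite nth_catr nth_cat S1 Ht //.
- have := G u2 H2 (size (u0 ++ u1)).
  have -> : 2 * m = size (u0 ++ u1) by rewrite size_cat S1; lia.
  by apply => t Ht; rewrite /W catA nth_catr nth_cat S2 Ht.
- have := G u3 H3 (size (u0 ++ u1 ++ u2)).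
  have -> : 3 * m = size (u0 ++ u1 ++ u2) by rewrite !size_cat S1 S2; lia.
  by apply => t Ht; rewrite /W !catA -(catA _ u3) nth_catr nth_cat S3 Ht.
Qed.


Definition lim (F : nat -> seq nat) n := nth 0 (F n.+1) n.

Lemma pref_le (F : nat -> seq nat) : (forall K, exists r, F K.+1 = F K ++ r) ->
  forall K d, exists r, F (K + d) = F K ++ r.
Proof.
move=> H K; elim=> [|d [r IH]]; first by exists [::]; rewrite addn0 cats0.
have [r' E] := H (K + d); exists (r ++ r'); by rewrite addnS E IH catA.
Qed.

Lemma lim_nth (F : nat -> seq nat) K n : (forall K, exists r, F K.+1 = F K ++ r) ->
  (forall K, K < size (F K)) -> n < size (F K) -> lim F n = nth 0 (F K) n.
Proof.
move=> H Hs Hn; rewrite /lim.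
case: (leqP K n.+1) => HK.
- have [r E] := pref_le H K (n.+1 - K).
  by rewrite subnKC in E => //; rewrite E nth_cat Hn.
- have [r E] := pref_le H n.+1 (K - n.+1).
  by rewrite subnKC in E; [rewrite E nth_cat (ltnW (Hs n.+1)) | lia].
Qed.

Definition hL (c : nat) : seq nat :=
  match c with
  | 0 => [:: 0;1;2;1;0;2;1;2;0;1;2;1;0]
  | 1 => [:: 1;2;0;2;1;0;2;0;1;2;0;2;1]
  | _ => [:: 2;0;1;0;2;1;0;1;2;0;1;0;2]
  end.
Definition gB (c : nat) : seq nat :=
  match c with
  | 0 => [:: 0;0;0;1;0]
  | 1 => [:: 0;0;1;0;1]
  | _ => [:: 0;0;1;1;1]
  end.

Lemma hL_unif : unif_check hL 13. Proof. by vm_compute. Qed.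
Lemma hL_inj : inj_check hL. Proof. by vm_compute. Qed.
Lemma hL_bif : bif_check hL 13. Proof. by vm_compute. Qed.
Lemma hL_lt3 : lt3_check hL. Proof. by vm_compute. Qed.
Lemma hL_sync : sync_check hL 13 8 2. Proof. by vm_compute. Qed.
Lemma hL_short : short_sq_check hL 3. Proof. by vm_compute. Qed.

Lemma gB_unif : unif_check gB 5. Proof. by vm_compute. Qed.
Lemma gB_inj : inj_check gB. Proof. by vm_compute. Qed.
Lemma gB_bif : bif_check gB 5. Proof. by vm_compute. Qed.
Lemma gB_sync : sync_check gB 5 8 3. Proof. by vm_compute. Qed.
Lemma gB_short : all (fun v => has_sq v || ~~ has_pp (img gB v) 7) (allle 7).
Proof. by vm_compute. Qed.
Lemma gB_lt2 : all (fun c => all (fun x => x < 2) (gB c)) (iota 0 3).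
Proof. by vm_compute. Qed.

Definition W K := iter K (img hL) [:: 0].

Lemma W_lt3 K : lt3 (W K).
Proof. elim: K => [|K IH] //=; exact: lt3_img hL_lt3 IH. Qed.

Lemma W_SF K : SF (W K).
Proof.
elim: K => [|K IH].
  by move=> i P [HP [Hs _]]; move: Hs => /=; lia.
exact: (SF_img (N := 2) _ hL_unif hL_inj hL_bif _ hL_sync _ hL_short (W_lt3 K) IH).
Qed.

Lemma W_size K : size (W K) = 13 ^ K.
Proof.
elim: K => [|K IH] //=; rewrite (size_img (unif_sound hL_unif)) ?W_lt3 //.
by rewrite -/(W K) IH expnS.
Qed.

Lemma W_pref K : exists r, W K.+1 = W K ++ r.
Proof.
elim: K => [|K [r IH]]; first by exists (behead (hL 0)).
by exists (img hL r); change (W K.+2) with (img hL (W K.+1)); rewrite {1}IH img_cat.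
Qed.

Lemma W_big K : K < size (W K).
Proof. rewrite W_size; exact: ltn_expl. Qed.

Definition Z K := img gB (W K).

Lemma Z_pref K : exists r, Z K.+1 = Z K ++ r.
Proof. have [r E] := W_pref K; exists (img gB r); by rewrite /Z E img_cat. Qed.

Lemma Z_size K : size (Z K) = 5 * size (W K).
Proof. by rewrite /Z (size_img (unif_sound gB_unif)) // W_lt3. Qed.

Lemma Z_big K : K < size (Z K).
Proof. rewrite Z_size; have := W_big K; lia. Qed.

Lemma Z_lt2 K q : q < size (Z K) -> nth 0 (Z K) q < 2.
Proof.
move=> Hq; rewrite /Z; move: Hq; rewrite /Z.
elim: (W K) (W_lt3 K) q => [|c w IH] //; rewrite {1}/lt3 /= => /andP[Hc Hw] q.
rewrite /img /= -/(img gB w) nth_cat size_cat.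
case: ifP => Hq1 Hq.
- have := allP gB_lt2 c (in3 Hc) => /allP; apply; exact: mem_nth.
- apply: IH => //; lia.
Qed.

Lemma Z_noPP K i m : ~ ppat 0 (Z K) i m.
Proof.
move=> H; apply: (@noPP gB 5 8 3 7 7 isT gB_unif gB_inj gB_bif isT gB_sync isT isT isT gB_short (W K) i m (@W_lt3 K) (@W_SF K)); exact H.
Qed.


Lemma flatten_single (T : Type) (s : seq T) : flatten [seq [:: y] | y <- s] = s.
Proof. by elim: s => //= y s ->. Qed.

Lemma singles_pk (T : Type) (th : seq T -> seq T) k (x : nat -> T) : 0 < k ->
  (forall i j, i < k -> j < k -> [:: x i] = [:: x j] \/ [:: x i] = th [:: x j]) ->
  pseudo_kth_power th k (factor x 0 k).
Proof.
move=> Hk H; split; first by rewrite /factor; case: (k) Hk.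
exists (mkseq (fun j => [:: x j]) k); split; first by rewrite size_mkseq.
split; first by rewrite /factor /mkseq; elim: (iota 0 k) => //= y s ->.
by move=> i j Hi Hj; rewrite !nth_mkseq //; apply: H.
Qed.

Lemma factor_nth (T : Type) (x0 : T) (x : nat -> T) i n q : q < n -> nth x0 (factor x i n) q = x (i + q).
Proof. by move=> Hq; rewrite /factor nth_mkseq. Qed.

Theorem mainTheorem3 (k : nat) (hk : 4 <= k) (Sigma : finType) :
  (#|Sigma| <= 1 ->
     forall theta : seq Sigma -> seq Sigma, antimorphic_involution theta ->
       ~ (exists x : nat -> Sigma, pseudo_kth_power_free theta k x)) /\
  (3 <= #|Sigma| ->
     forall theta : seq Sigma -> seq Sigma, antimorphic_involution theta ->
       exists x : nat -> Sigma, pseudo_kth_power_free theta k x) /\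
  (#|Sigma| = 2 ->
     exists theta1 theta2 : seq Sigma -> seq Sigma,
       antimorphic_involution theta1 /\ antimorphic_involution theta2 /\
       (exists x : nat -> Sigma, pseudo_kth_power_free theta1 k x) /\
       ~ (exists x : nat -> Sigma, pseudo_kth_power_free theta2 k x)).
Proof.
split.
  move=> /fintype_le1P Hc th Hth [x Hx]; apply: (Hx 0 k); apply: singles_pk; first lia.
  by move=> i j _ _; left; rewrite (Hc (x 0) (x i)) (Hc (x 0) (x j)).
split.
  move=> Hc th Hth.
  have : 3 <= size (enum Sigma) by rewrite -cardE.
  have Hu : uniq (enum Sigma) := enum_uniq _.
  case E: (enum Sigma) Hu => [|a l] // Hu Hs.
  pose e c := nth a (a :: l) c.
  have He : forall c c', c < 3 -> c' < 3 -> e c = e c' -> c = c'.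
    move=> c c' Hc1 Hc2 Hee; apply/eqP; rewrite -(nth_uniq a _ _ Hu) /=; try (move: Hs; rewrite /=; lia).
    by apply/eqP.
    exists (fun n => e (lim W n)); move=> i n Hp.
  have [i' [P Hsq]] := pk_sq a Hth hk Hp.
  have [_ [Hb _]] := Hsq.
  move: Hb; rewrite /factor size_mkseq => Hb.
  have HK := W_big (i + n).
  suff HH : sq_at 0 (W (i + n)) (i + i') P by exact: (@W_SF (i + n) (i + i') P HH).
  apply: (@sq_tr _ _ a 0 _ _ i' _ _ e) Hsq; first lia.
  - move=> q Hq; rewrite factor_nth; last lia.
    by rewrite (@lim_nth W (i + n)) ?addnA //; [exact: W_pref | exact: W_big | lia].
  - move=> q q' Hq Hq'; apply: He; apply: lt3_nth; try exact: W_lt3; lia.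
move=> Hc.
have : size (enum Sigma) = 2 by rewrite -cardE.
have Hu : uniq (enum Sigma) := enum_uniq _.
have Hall : forall y : Sigma, y \in enum Sigma by move=> y; rewrite mem_enum.
case E: (enum Sigma) Hu Hall => [|a [|b [|c l]]] // Hu Hall _.
have Hab : a != b by move: Hu; rewrite /= inE andbT.
have Hy : forall y : Sigma, y = a \/ y = b.
  by move=> y; have := Hall y; rewrite !inE => /orP[/eqP|/eqP]; tauto.
pose sw (y : Sigma) := if y == a then b else a.
have swK : forall y, sw (sw y) = y.
  have Hba : (b == a) = false by rewrite eq_sym (negbTE Hab).
  by move=> y; case: (Hy y) => ->; rewrite /sw ?eqxx ?Hba ?eqxx.
exists (@rev Sigma), (fun w => rev (map sw w)).
split; first by split; [exact: rev_cat | exact: revK].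
split.
  split; first by move=> u v; rewrite map_cat rev_cat.
  move=> w; rewrite map_rev revK -map_comp.
  by rewrite (@eq_map _ _ _ id) ?map_id // => y /=; rewrite swK.
split.
  pose e (c : nat) := if c == 0 then a else b.
  exists (fun n => e (lim Z n)); move=> i n Hp.
  have [m Hpp] := pk_pp a hk Hp.
  have [_ [Hb _]] := Hpp.
  move: Hb; rewrite /factor size_mkseq => Hb.
  have HK := Z_big (i + n).
  suff HH : ppat 0 (Z (i + n)) (0 + i) m by exact: (@Z_noPP (i + n) i m HH).
  apply: (@pp_tr _ _ a 0 _ _ 0 _ _ e) Hpp; first lia.
  - move=> q Hq; rewrite add0n factor_nth; last lia.
    by rewrite (@lim_nth Z (i + n)) //; [exact: Z_pref | exact: Z_big | lia].
  - move=> q q' Hq Hq'.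
    have := @Z_lt2 (i + n) (i + q) ltac:(lia).
    have := @Z_lt2 (i + n) (i + q') ltac:(lia).
    rewrite /e; case: (nth 0 (Z (i + n)) (i + q)) => [|[|?]] //;
      case: (nth 0 (Z (i + n)) (i + q')) => [|[|?]] //= _ _ /eqP; by rewrite ?(negbTE Hab) // eq_sym (negbTE Hab).
move=> [x Hx]; apply: (Hx 0 k); apply: singles_pk; first lia.
move=> i j _ _; case: (Hy (x i)) => ->; case: (Hy (x j)) => ->; try by left.
- by right; rewrite /= /sw eq_sym (negbTE Hab).
- by right; rewrite /= /sw eqxx.
Qed.
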